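(* Let $s,t_1,\dots,t_n\in\mathbb{R}^2$ be distinct points, with $T=\{t_1,\dots,t_n\}$ ordered so that $D_{st_1}\le\dots\le D_{st_n}$, and let $P_s=P_r>0$, $N_0>0$, $\alpha\ge 2$. Let $m$ be the midpoint of the segment $[s,t_n]$, and let $C_s$, $C_m$ be the closed disks of radius $D_{st_n}/2$ centered at $s$ and at $m$ respectively. If $T\subseteq C_s\cup C_m$ (and $m\notin T$), then placing the relay at $m$ maximizes the multicast rate $R^*_{sT}(r)$ over all relay positions $r\in\mathbb{R}^2\setminus(\{s\}\cup T)$.
   Context: $D_{uv}$ is Euclidean distance. Achievable low-SNR broadcast-relay hypergraph model: for a relay position $r\notin\{s\}\cup T$, the node set is $\mathcal{N}=\{s,r\}\cup T$. The hyperarcs are $(s,J)$ for nonempty $J\subseteq\{r\}\cup T$ and $(r,J)$ for nonempty $J\subseteq T$. A power allocation assigns $P_{sJ}\ge0$, $P_{rJ}\ge0$ with $\sum_J P_{sJ}\le P_s$ and $\sum_J P_{rJ}\le P_r$; the capacity of hyperarc $(i,J)$ is $c_{iJ}=P_{iJ}/(N_0\max_{j\in J}D_{ij}^{\alpha})$. For a receiver $t\in T$, $R_{st}$ is the minimum, over all $S\subseteq\mathcal{N}$ with $s\in S$, $t\notin S$, of $\sum c_{iJ}$ over hyperarcs with $i\in S$ and $J\not\subseteq S$. The multicast rate is $R_{sT}=\min_{t\in T}R_{st}$, and $R^*_{sT}(r)$ is its maximum over all power allocations. *)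

(* Defs.v *)
From Stdlib Require Import Reals.
From mathcomp Require Import all_boot.

Set Implicit Arguments.
Unset Strict Implicit.
Unset Printing Implicit Defensive.

Local Open Scope R_scope.

Definition pt : Type := (R * R)%type.

Definition Ddist (p q : pt) : R :=
  sqrt ((fst p - fst q) ^ 2 + (snd p - snd q) ^ 2).

Definition midpoint (p q : pt) : pt :=
  ((fst p + fst q) / 2, (snd p + snd q) / 2).

(* Nodes of the hypergraph with n receivers:
   None = source s, Some None = relay r, Some (Some i) = receiver t_(i+1). *)
Notation node n := (option (option 'I_n)).

Definition src {n : nat} : node n := None.
Definition rel {n : nat} : node n := Some None.
Definition tgt {n : nat} (i : 'I_n) : node n := Some (Some i).

Definition pos (n : nat) (s r : pt) (t : nat -> pt) (v : node n) : pt :=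
  match v with
  | None => s
  | Some None => r
  | Some (Some i) => t (nat_of_ord i)
  end.

(* Hyperarcs: (s,J) for nonempty J ⊆ {r} ∪ T, and (r,J) for nonempty J ⊆ T. *)
Definition hyperarc (n : nat) (i : node n) (J : {set node n}) : bool :=
  match i with
  | None => (J != set0) && (src \notin J)
  | Some None => [&& J != set0, src \notin J & rel \notin J]
  | Some (Some _) => false
  end.

Definition fsum (T : finType) (P : pred T) (f : T -> R) : R :=
  foldr (fun x acc => f x + acc) 0 (filter P (enum T)).

(* Minimum of a (nonempty) list of reals; 0 on the empty list (never used). *)
Definition minlist (l : seq R) : R :=
  match l with
  | [::] => 0
  | x :: l' => foldr Rmin x l'
  end.

Definition alloc (n : nat) : Type := node n -> {set node n} -> R.

Definition power_ok (n : nat) (Ps Pr : R) (a : alloc n) : Prop :=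
  (forall i J, hyperarc i J -> 0 <= a i J) /\
  fsum (hyperarc src) (a src) <= Ps /\
  fsum (hyperarc rel) (a rel) <= Pr.

Definition max_dist_pow (n : nat) (s r : pt) (t : nat -> pt) (alpha : R)
  (i : node n) (J : {set node n}) : R :=
  foldr (fun j acc => Rmax (Rpower (Ddist (pos s r t i) (pos s r t j)) alpha) acc)
        0 (enum J).

Definition cap (n : nat) (s r : pt) (t : nat -> pt) (N0 alpha : R) (a : alloc n)
  (i : node n) (J : {set node n}) : R :=
  a i J / (N0 * max_dist_pow s r t alpha i J).

Definition cut_value (n : nat) (s r : pt) (t : nat -> pt) (N0 alpha : R)
  (a : alloc n) (C : {set node n}) : R :=
  fsum (fun iJ : node n * {set node n} =>
          [&& iJ.1 \in C, hyperarc iJ.1 iJ.2 & ~~ (iJ.2 \subset C)])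
       (fun iJ => cap s r t N0 alpha a iJ.1 iJ.2).

Definition rate_st (n : nat) (s r : pt) (t : nat -> pt) (N0 alpha : R)
  (a : alloc n) (k : 'I_n) : R :=
  minlist (map (cut_value s r t N0 alpha a)
    (filter (fun C : {set node n} => (src \in C) && (tgt k \notin C))
            (enum [set: {set node n}]))).

Definition multicast_rate (n : nat) (s r : pt) (t : nat -> pt) (N0 alpha : R)
  (a : alloc n) : R :=
  minlist [seq rate_st s r t N0 alpha a k | k <- enum 'I_n].

(* Main.v *)
From HB Require Import structures.
Require Import Defs.
From Stdlib Require Import Reals Lra Psatz.
Local Open Scope R_scope.

Lemma Rpower_pos' x y : 0 < Rpower x y.
Proof. unfold Rpower; apply exp_pos. Qed.

Lemma conv_incr (al a d : R) : 1 <= al -> 0 < d -> d <= a ->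
  Rpower (a + d) al - Rpower d al <= Rpower (2 * a) al - Rpower a al.
Proof.
intros Hal Hd Hda.
destruct (Req_dec d a) as [->|Hne].
{ replace (a + a) with (2 * a) by ring; lra. }
assert (Hlt : d < a) by lra.
pose (g := fun u => Rpower (u + a) al - Rpower u al).
pose (gd := fun u => al * Rpower (u + a) (al - 1) * 1 - al * Rpower u (al - 1)).
destruct (MVT_cor2 g gd d a Hlt) as [c [Hc1 Hc2]].
{ intros c Hc. unfold g, gd.
  apply derivable_pt_lim_minus.
  - apply (derivable_pt_lim_comp (fun u => u + a) (fun x => Rpower x al)).
    + replace 1 with (1 + 0) by ring.
      apply derivable_pt_lim_plus; [apply derivable_pt_lim_id|apply derivable_pt_lim_const].
    + apply derivable_pt_lim_power; lra.
  - apply derivable_pt_lim_power; lra. }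
assert (Hgd : 0 <= gd c).
{ unfold gd. assert (Rpower c (al - 1) <= Rpower (c + a) (al - 1)).
  { apply Rle_Rpower_l; lra. }
  nra. }
unfold g in Hc1.
replace (2 * a) with (a + a) by ring.
replace (a + d) with (d + a) by ring.
nra.
Qed.

Lemma Ddist_pos p q : p <> q -> 0 < Ddist p q.
Proof.
intros H. unfold Ddist. apply sqrt_lt_R0.
destruct p as [p1 p2], q as [q1 q2]; simpl.
destruct (Req_dec p1 q1) as [E1|E1]; destruct (Req_dec p2 q2) as [E2|E2].
- subst; congruence.
- destruct (Rlt_or_le p2 q2); [|assert (p2 > q2) by lra]; nra.
- destruct (Rlt_or_le p1 q1); [|assert (p1 > q1) by lra]; nra.
- destruct (Rlt_or_le p1 q1); [|assert (p1 > q1) by lra]; nra.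
Qed.

Lemma Ddist_tri p q r : Ddist p q <= Ddist p r + Ddist r q.
Proof.
destruct p as [p1 p2], q as [q1 q2], r as [r1 r2]; unfold Ddist; cbn [fst snd].
set (a1 := p1 - r1); set (a2 := p2 - r2); set (b1 := r1 - q1); set (b2 := r2 - q2).
replace (p1 - q1) with (a1 + b1) by (unfold a1, b1; ring).
replace (p2 - q2) with (a2 + b2) by (unfold a2, b2; ring).
set (A := a1 ^ 2 + a2 ^ 2). set (B := b1 ^ 2 + b2 ^ 2).
assert (HA : 0 <= A) by (unfold A; nra). assert (HB : 0 <= B) by (unfold B; nra).
assert (SA := sqrt_sqrt A HA). assert (SB := sqrt_sqrt B HB).
assert (PA := sqrt_pos A). assert (PB := sqrt_pos B).
assert (CS : a1 * b1 + a2 * b2 <= sqrt A * sqrt B).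
{ assert ((a1 * b1 + a2 * b2)^2 <= (sqrt A * sqrt B)^2).
  { replace ((sqrt A * sqrt B)^2) with ((sqrt A * sqrt A) * (sqrt B * sqrt B)) by ring. rewrite SA, SB.
    unfold A, B. assert (0 <= (a1*b2 - a2*b1)^2) by apply pow2_ge_0. nra. }
  assert (0 <= sqrt A * sqrt B) by (apply Rmult_le_pos; lra). destruct (Rle_or_lt (a1 * b1 + a2 * b2) (sqrt A * sqrt B)); [assumption|nra]. }
rewrite <- (sqrt_pow2 (sqrt A + sqrt B)) by lra.
apply sqrt_le_1_alt.
replace ((sqrt A + sqrt B)^2) with (sqrt A * sqrt A + sqrt B * sqrt B + 2 * (sqrt A * sqrt B)) by ring. rewrite SA, SB.
assert (EA : A = a1^2+a2^2) by reflexivity. assert (EB : B = b1^2+b2^2) by reflexivity. clearbody A B. nra.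
Qed.

Lemma Ddist_mid s u : Ddist s (midpoint s u) = Ddist s u / 2.
Proof.
destruct s as [s1 s2], u as [u1 u2]; unfold Ddist, midpoint; cbn [fst snd].
set (S := (s1 - u1) ^ 2 + (s2 - u2) ^ 2).
assert (HS : 0 <= S) by (unfold S; apply Rplus_le_le_0_compat; apply pow2_ge_0).
replace ((s1 - (s1 + u1) / 2) ^ 2 + (s2 - (s2 + u2) / 2) ^ 2) with ((sqrt S / 2) ^ 2).
- apply sqrt_pow2. assert (H := sqrt_pos S). lra.
- replace ((sqrt S / 2) ^ 2) with (sqrt S * sqrt S / 4) by field.
  rewrite sqrt_sqrt by exact HS. unfold S. field.
Qed.

Lemma final0 (A B C Rr p q y P : R) :
  0 < A -> 0 < B -> 0 < C -> 0 < Rr -> Rr <= A ->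
  (C < Rr -> Rr * (A + B - C) <= A * B) ->
  0 <= p -> 0 <= q -> 0 <= y -> p + q <= P -> y <= P ->
  Rmin (p / A + y / B) (p / A + q / C) <= P / Rr.
Proof.
intros HA HB HC HR HRA HK Hp Hq Hy Hpq HyP.
set (a := / A). set (b := / B). set (c := / C). set (rho := / Rr).
assert (Ha : 0 < a) by (apply Rinv_0_lt_compat; lra).
assert (Hb : 0 < b) by (apply Rinv_0_lt_compat; lra).
assert (Hc : 0 < c) by (apply Rinv_0_lt_compat; lra).
assert (Hr : 0 < rho) by (apply Rinv_0_lt_compat; lra).
assert (Har : a <= rho) by (apply Rinv_le_contravar; lra).
unfold Rdiv; fold a b c rho.
destruct (Rle_or_lt Rr C) as [HCR|HCR].
- assert (c <= rho) by (apply Rinv_le_contravar; lra).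
  apply Rle_trans with (p * a + q * c); [apply Rmin_r|]. nra.
- assert (Hrc : rho < c) by (apply Rinv_lt_contravar; nra).
  assert (K : a * c + b * c - a * b <= rho * c).
  { specialize (HK HCR).
    assert (E : a * c + b * c - a * b = Rr * (A + B - C) * (a * b * c * rho)).
    { unfold a, b, c, rho; field; lra. }
    assert (E2 : rho * c = A * B * (a * b * c * rho)).
    { unfold a, b, c, rho; field; lra. }
    rewrite E, E2. apply Rmult_le_compat_r; [|exact HK].
    repeat apply Rmult_le_pos; lra. }
  destruct (Rle_or_lt (p * a + y * b) (P * rho)) as [H1|H1].
  + apply Rle_trans with (p * a + y * b); [apply Rmin_l| exact H1].
  + apply Rle_trans with (p * a + q * c); [apply Rmin_r|].
    assert (H2 : p * a + P * b > P * rho) by nra.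
    assert (H3 : p * a * (c - a) >= P * (rho - b) * (c - a)) by nra.
    assert (H5 : 0 <= (P - p - q) * (a * c)) by (apply Rmult_le_pos; nra).
    assert (H6 : 0 <= P * (rho * c - (a * c + b * c - a * b))) by (apply Rmult_le_pos; lra).
    assert (H4 : a * (P * rho - p * a - q * c) >= 0) by nra.
    nra.
Qed.

From mathcomp Require Import all_boot.
From mathcomp Require Import zify.
Local Open Scope R_scope.
HB.instance Definition _ := Monoid.isComLaw.Build R 0 Rplus (fun a b c => esym (Rplus_assoc a b c)) Rplus_comm Rplus_0_l.
Lemma fsumE (T : finType) (P : pred T) (f : T -> R) :
  fsum P f = \big[Rplus/0]_(x | P x) f x.
Proof.
rewrite /fsum -big_filter.
have -> : [seq x <- index_enum T | P x] = [seq x <- enum T | P x].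
  by rewrite enumT /index_enum; unlock.
elim: [seq x <- enum T | P x] => [|x l IH]. by rewrite big_nil. by rewrite big_cons -IH.
Qed.

Section Sums.
Variable I : finType.
Implicit Types (P Q : pred I) (F G : I -> R).

Lemma sum_le P F G : (forall i, P i -> F i <= G i) ->
  \big[Rplus/0]_(i | P i) F i <= \big[Rplus/0]_(i | P i) G i.
Proof.
move=> H; apply: (big_ind2 (fun x y => x <= y)) => //; first lra.
move=> *; lra.
Qed.

Lemma sum_ge0 P F : (forall i, P i -> 0 <= F i) -> 0 <= \big[Rplus/0]_(i | P i) F i.
Proof. move=> H; apply: (big_ind (fun x => 0 <= x)) => //; [lra|move=> *; lra]. Qed.

Lemma sum_sub P Q F : (forall i, P i -> Q i) -> (forall i, Q i -> 0 <= F i) ->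
  \big[Rplus/0]_(i | P i) F i <= \big[Rplus/0]_(i | Q i) F i.
Proof.
move=> PQ H; rewrite [X in _ <= X](bigID P) /=.
have -> : \big[Rplus/0]_(i | Q i && P i) F i = \big[Rplus/0]_(i | P i) F i.
  apply: eq_bigl => i; case Pi: (P i); last by rewrite andbF.
  by rewrite (PQ _ Pi).
have : 0 <= \big[Rplus/0]_(i | Q i && ~~ P i) F i.
  by apply: sum_ge0 => i /andP [Qi _]; apply: H.
lra.
Qed.

Lemma sum_term P F j : P j -> (forall i, P i -> 0 <= F i) ->
  F j <= \big[Rplus/0]_(i | P i) F i.
Proof.
move=> Pj H; rewrite (bigD1 j) //=.
have : 0 <= \big[Rplus/0]_(i | P i && (i != j)) F i.
  by apply: sum_ge0 => i /andP [Pi _]; apply: H.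
lra.
Qed.

Lemma sum_div P F c : c <> 0 ->
  \big[Rplus/0]_(i | P i) (F i / c) = (\big[Rplus/0]_(i | P i) F i) / c.
Proof.
move=> Hc; apply: (big_ind2 (fun x y => x = y / c)).
- by field.
- by move=> x1 x2 y1 y2 -> ->; field.
- by [].
Qed.

Lemma sum_pick P (x : I) (c : R) :
  \big[Rplus/0]_(i | P i) (if i == x then c else 0) = if P x then c else 0.
Proof.
case Px: (P x).
- rewrite (bigD1 x) // eqxx big1 /=; [ring | move=> i /andP [_ /negbTE ->] //].
- by rewrite big1 // => i Pi; case: eqP => // E; subst; rewrite Px in Pi.
Qed.
End Sums.

Section Net.
Variable n : nat.

Lemma cut_decomp s r t N0 al (a : alloc n) (C : {set node n}) :
  cut_value s r t N0 al a C =
  (if src \in C then \big[Rplus/0]_(J | hyperarc src J && ~~ (J \subset C)) cap s r t N0 al a src J else 0)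
  + (if Defs.rel \in C then \big[Rplus/0]_(J | hyperarc Defs.rel J && ~~ (J \subset C)) cap s r t N0 al a Defs.rel J else 0).
Proof.
rewrite /cut_value fsumE.
transitivity (\big[Rplus/0]_(i | i \in C) \big[Rplus/0]_(J | hyperarc i J && ~~ (J \subset C)) cap s r t N0 al a i J).
  by rewrite pair_big_dep.
rewrite big_mkcond (bigD1 src) // (bigD1 Defs.rel) //= [X in _ + (_ + X) = _]big1; first ring.
move=> [[k|]|] //= _.
by case: ifP => // _; rewrite big1 // => J /andP [].
Qed.

Lemma foldmax_ge (T : eqType) (f : T -> R) l j : j \in l ->
  f j <= foldr (fun j acc => Rmax (f j) acc) 0 l.
Proof.
elim: l => [//|x l IH] /=; rewrite in_cons => /orP [/eqP ->|H].
  apply: Rmax_l.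
apply: Rle_trans (IH H) _; apply: Rmax_r.
Qed.

Lemma foldmax_le (T : eqType) (f : T -> R) l M : 0 <= M -> (forall j, j \in l -> f j <= M) ->
  foldr (fun j acc => Rmax (f j) acc) 0 l <= M.
Proof.
move=> HM; elim: l => [//|x l IH] /= H.
apply: Rmax_lub; first by apply: H; rewrite in_cons eqxx.
by apply: IH => j jl; apply: H; rewrite in_cons jl orbT.
Qed.

Lemma mdp_ge s r t al (i : node n) (J : {set node n}) j : j \in J ->
  Rpower (Ddist (Defs.pos s r t i) (Defs.pos s r t j)) al <= max_dist_pow s r t al i J.
Proof.
move=> jJ; have H := @foldmax_ge _ (fun j => Rpower (Ddist (Defs.pos s r t i) (Defs.pos s r t j)) al) (enum J) j.
rewrite mem_enum in H; exact: H jJ.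
Qed.

Lemma mdp_le s r t al (i : node n) (J : {set node n}) M : 0 <= M ->
  (forall j, j \in J -> Rpower (Ddist (Defs.pos s r t i) (Defs.pos s r t j)) al <= M) ->
  max_dist_pow s r t al i J <= M.
Proof.
move=> HM H; have := @foldmax_le _ (fun j => Rpower (Ddist (Defs.pos s r t i) (Defs.pos s r t j)) al) (enum J) M HM.
apply => j; rewrite mem_enum; apply: H.
Qed.

Lemma mdp_pos s r t al (i : node n) (J : {set node n}) : J != set0 -> 0 < max_dist_pow s r t al i J.
Proof.
case/set0Pn => j jJ; have Hj := @mdp_ge s r t al i J j jJ; apply: (Rlt_le_trans _ _ _ _ Hj).
rewrite /Rpower; apply: exp_pos.
Qed.

Lemma cap_ge0 s r t N0 al (a : alloc n) (i : node n) (J : {set node n}) : 0 < N0 ->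
  (forall i J, hyperarc i J -> 0 <= a i J) -> hyperarc i J -> 0 <= cap s r t N0 al a i J.
Proof.
move=> HN Ha hJ.
have HJ : J != set0 by move: hJ; case: i => [[k|]|] //= /andP [].
have := @mdp_pos s r t al i J HJ => Hm.
rewrite /cap; apply: Rmult_le_pos; first by apply: Ha.
apply: Rlt_le; apply: Rinv_0_lt_compat; apply: Rmult_lt_0_compat => //.
Qed.

Lemma cap_le s r t N0 al (a : alloc n) (i : node n) (J : {set node n}) j : 0 < N0 ->
  (forall i J, hyperarc i J -> 0 <= a i J) -> hyperarc i J -> j \in J ->
  cap s r t N0 al a i J <= a i J / (N0 * Rpower (Ddist (Defs.pos s r t i) (Defs.pos s r t j)) al).
Proof.
move=> HN Ha hJ jJ.
have H1 := @mdp_ge s r t al i J j jJ.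
have H0 : 0 < Rpower (Ddist (Defs.pos s r t i) (Defs.pos s r t j)) al by rewrite /Rpower; apply: exp_pos.
rewrite /cap; apply: Rmult_le_compat_l; first by apply: Ha.
apply: Rinv_le_contravar; first by apply: Rmult_lt_0_compat.
by apply: Rmult_le_compat_l; lra.
Qed.

Lemma cap_ge s r t N0 al (a : alloc n) (i : node n) (J : {set node n}) M : 0 < N0 -> 0 < M ->
  0 <= a i J -> J != set0 ->
  (forall j, j \in J -> Rpower (Ddist (Defs.pos s r t i) (Defs.pos s r t j)) al <= M) ->
  a i J / (N0 * M) <= cap s r t N0 al a i J.
Proof.
move=> HN HM Ha HJ H.
have H1 := @mdp_le s r t al i J M (Rlt_le _ _ HM) H.
have H0 := @mdp_pos s r t al i J HJ.
rewrite /cap; apply: Rmult_le_compat_l => //.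
apply: Rinv_le_contravar; first by apply: Rmult_lt_0_compat.
by apply: Rmult_le_compat_l; lra.
Qed.

End Net.

Lemma minlist_aux (T : eqType) (f : T -> R) (s : seq T) x :
  foldr Rmin x (map f s) <= x /\ forall y, y \in s -> foldr Rmin x (map f s) <= f y.
Proof.
elim: s => [|z s [IH1 IH2]] /=; first by split; [lra|].
split; first by apply: Rle_trans (Rmin_r _ _) IH1.
move=> y; rewrite in_cons => /orP [/eqP ->|ys]; first by apply: Rmin_l.
by apply: Rle_trans (Rmin_r _ _) (IH2 _ ys).
Qed.

Lemma minlist_le (T : eqType) (f : T -> R) (s : seq T) y : y \in s -> minlist (map f s) <= f y.
Proof.
case: s => [//|z s] /=; rewrite in_cons => /orP [/eqP ->|ys]; first by case: (@minlist_aux T f s (f z)).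
by case: (@minlist_aux T f s (f z)) => _; apply.
Qed.

Lemma minlist_ge (T : eqType) (f : T -> R) (s : seq T) V : s != [::] ->
  (forall y, y \in s -> V <= f y) -> V <= minlist (map f s).
Proof.
case: s => [//|z s] _ /= H.
have : V <= f z by apply: H; rewrite in_cons eqxx.
elim: s H => [|w s IH] H Hz //=.
apply: Rmin_glb; first by apply: H; rewrite !in_cons eqxx orbT.
by apply: IH => // y; rewrite in_cons => /orP [/eqP ->|ys]; apply: H; rewrite !in_cons ?eqxx ?ys ?orbT.
Qed.

Lemma sum_cap_le (n : nat) s r t N0 al (a : alloc n) (i : node n) (P : pred {set node n}) (j : node n) :
  0 < N0 -> (forall i J, hyperarc i J -> 0 <= a i J) ->
  (forall J, P J -> hyperarc i J /\ j \in J) ->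
  \big[Rplus/0]_(J | P J) cap s r t N0 al a i J <=
  (\big[Rplus/0]_(J | P J) a i J) / (N0 * Rpower (Ddist (Defs.pos s r t i) (Defs.pos s r t j)) al).
Proof.
move=> HN Ha H.
have H0 : 0 < Rpower (Ddist (Defs.pos s r t i) (Defs.pos s r t j)) al by apply: Rpower_pos'.
rewrite -sum_div; last by apply: Rgt_not_eq; apply: Rmult_lt_0_compat.
apply: sum_le => J PJ; case: (H J PJ) => hJ jJ.
exact: cap_le.
Qed.

Theorem lemma3 (n : nat) (s : pt) (t : nat -> pt) (Ps Pr N0 alpha : R) :
  (0 < n)%nat ->
  (forall i, (i < n)%nat -> t i <> s) ->
  (forall i j, (i < n)%nat -> (j < n)%nat -> i <> j -> t i <> t j) ->
  (forall i j, (i <= j)%nat -> (j < n)%nat -> Ddist s (t i) <= Ddist s (t j)) ->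
  Ps = Pr -> 0 < Ps -> 0 < N0 -> 2 <= alpha ->
  let m := midpoint s (t (n - 1)%nat) in
  let rad := Ddist s (t (n - 1)%nat) / 2 in
  (forall i, (i < n)%nat -> Ddist s (t i) <= rad \/ Ddist m (t i) <= rad) ->
  (forall i, (i < n)%nat -> t i <> m) ->
  forall r : pt, r <> s -> (forall i, (i < n)%nat -> t i <> r) ->
  forall a : alloc n, power_ok Ps Pr a ->
  exists a' : alloc n, power_ok Ps Pr a' /\
    multicast_rate s r t N0 alpha a <= multicast_rate s m t N0 alpha a'.
Proof.
move=> Hn Hts Htt Hord HPs HP HN0 Hal m rad Hcov Htm r Hrs Htr a Hok.
have Hk : (n - 1 < n)%nat by lia.
pose k : 'I_n := Ordinal Hk.
have HD : 0 < Ddist s (t (n - 1)%nat).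
  by apply: Ddist_pos => E; apply: (Hts (n - 1)%nat Hk); rewrite E.
have Hrad : 0 < rad by rewrite /rad; lra.
have HFR : 0 < Rpower rad alpha by apply: Rpower_pos'.
pose V := Ps / (N0 * Rpower rad alpha).
have Hup : multicast_rate s r t N0 alpha a <= V.
  case: Hok => [Ha [HPsum HPrsum]].
  rewrite fsumE in HPsum; rewrite fsumE in HPrsum.
  pose CA : {set node n} := [set v | v != tgt k].
  pose CB : {set node n} := [set v | (v != tgt k) && (v != Defs.rel)].
  have sA : forall J : {set node n}, (J \subset CA) = (tgt k \notin J).
    move=> J; apply/subsetP/idP => [H|H v vJ].
      by apply/negP => /H; rewrite inE eqxx.
    by rewrite inE; apply/eqP => E; move: H; rewrite -E vJ.
  have sB : forall J : {set node n}, (J \subset CB) = (tgt k \notin J) && (Defs.rel \notin J).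
    move=> J; apply/subsetP/andP => [H|[H1 H2] v vJ].
      by split; apply/negP => /H; rewrite inE eqxx ?andbF.
    by rewrite inE; apply/andP; split; apply/eqP => E; [move: H1|move: H2]; rewrite -E vJ.
  have Hr1 : multicast_rate s r t N0 alpha a <= rate_st s r t N0 alpha a k.
    have := @minlist_le _ (rate_st s r t N0 alpha a) (enum 'I_n) k.
    by rewrite mem_enum; apply.
  have HinC : forall C : {set node n}, src \in C -> tgt k \notin C ->
      rate_st s r t N0 alpha a k <= cut_value s r t N0 alpha a C.
    move=> C H1 H2; rewrite /rate_st.
    apply: (@minlist_le _ (cut_value s r t N0 alpha a)).
    by rewrite mem_filter mem_enum in_setT H1 H2.
  have HcA : rate_st s r t N0 alpha a k <= cut_value s r t N0 alpha a CA by apply: HinC; rewrite !inE ?eqxx.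
  have HcB : rate_st s r t N0 alpha a k <= cut_value s r t N0 alpha a CB by apply: HinC; rewrite !inE ?eqxx.
  pose FA := Rpower (Ddist s (t (n - 1)%nat)) alpha.
  pose FB := Rpower (Ddist r (t (n - 1)%nat)) alpha.
  pose FC := Rpower (Ddist s r) alpha.
  pose p := \big[Rplus/0]_(J | hyperarc src J && (tgt k \in J)) a src J.
  pose q := \big[Rplus/0]_(J | (hyperarc src J && ~~ (J \subset CB)) && ~~ (tgt k \in J)) a src J.
  pose y := \big[Rplus/0]_(J | hyperarc Defs.rel J && ~~ (J \subset CA)) a Defs.rel J.
  have Hp0 : 0 <= p by apply: sum_ge0 => J /andP [h _]; apply: Ha.
  have Hq0 : 0 <= q by apply: sum_ge0 => J /andP [/andP [h _] _]; apply: Ha.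
  have Hy0 : 0 <= y by apply: sum_ge0 => J /andP [h _]; apply: Ha.
  have Hy : y <= Ps.
    rewrite HPs; apply: Rle_trans HPrsum.
    by apply: sum_sub => [J /andP [] //|J h]; apply: Ha.
  have Hpq : p + q <= Ps.
    apply: Rle_trans HPsum.
    have -> : p = \big[Rplus/0]_(J | (hyperarc src J && ~~ (J \subset CB)) && (tgt k \in J)) a src J.
      apply: eq_bigl => J; rewrite sB; by case: (tgt k \in J); rewrite ?andbT ?andbF.
    rewrite /q -bigID /=.
    by apply: sum_sub => [J /andP [] //|J h]; apply: Ha.
  have HcutA : cut_value s r t N0 alpha a CA <= p / (N0 * FA) + y / (N0 * FB).
    rewrite cut_decomp !inE /=.
    apply: Rplus_le_compat.
      have -> : p = \big[Rplus/0]_(J | hyperarc src J && ~~ (J \subset CA)) a src J.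
        by apply: eq_bigl => J; rewrite sA negbK.
      apply: (@sum_cap_le n s r t N0 alpha a _ _ (tgt k)) => // J /andP [h]; rewrite sA negbK //.
    apply: (@sum_cap_le n s r t N0 alpha a _ _ (tgt k)) => // J /andP [h]; rewrite sA negbK //.
  have HcutB : cut_value s r t N0 alpha a CB <= p / (N0 * FA) + q / (N0 * FC).
    rewrite cut_decomp !inE !eqxx /= Rplus_0_r (bigID (fun J : {set node n} => tgt k \in J)) /=.
    apply: Rplus_le_compat.
      have -> : p = \big[Rplus/0]_(J | (hyperarc src J && ~~ (J \subset CB)) && (tgt k \in J)) a src J.
        apply: eq_bigl => J; rewrite sB; by case: (tgt k \in J); rewrite ?andbT ?andbF.
      by apply: (@sum_cap_le n s r t N0 alpha a _ _ (tgt k)) => // J /andP [/andP [h _] ->].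
    apply: (@sum_cap_le n s r t N0 alpha a _ _ Defs.rel) => // J /andP [/andP [h]].
    by rewrite sB negb_and !negbK => /orP [->|->].
  have Hd1 : 0 < Ddist s r by apply: Ddist_pos => E; apply: Hrs.
  have Hd2 : 0 < Ddist r (t (n - 1)%nat) by apply: Ddist_pos => E; apply: (Htr _ Hk).
  have HFA : 0 < FA by apply: Rpower_pos'.
  have HFB : 0 < FB by apply: Rpower_pos'.
  have HFC : 0 < FC by apply: Rpower_pos'.
  have HRA : Rpower rad alpha <= FA by apply: Rle_Rpower_l; rewrite /rad; lra.
  have HK : N0 * FC < N0 * Rpower rad alpha ->
      N0 * Rpower rad alpha * (N0 * FA + N0 * FB - N0 * FC) <= N0 * FA * (N0 * FB).
    move=> HCR.
    have Hd1r : Ddist s r < rad.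
      case: (Rlt_or_le (Ddist s r) rad) => // H.
      have : Rpower rad alpha <= FC by apply: Rle_Rpower_l; lra.
      nra.
    pose aa := Ddist s (t (n - 1)%nat) - Ddist s r.
    have Haa : 0 < aa by rewrite /aa /rad in Hd1r *; lra.
    have Hci := conv_incr alpha aa (Ddist s r) ltac:(lra) Hd1 ltac:(rewrite /aa /rad in Hd1r *; lra).
    have E1 : aa + Ddist s r = Ddist s (t (n - 1)%nat) by rewrite /aa; ring.
    rewrite E1 in Hci.
    have E2 : Rpower (2 * aa) alpha = Rpower 2 alpha * Rpower aa alpha.
      by rewrite Rpower_mult_distr //; lra.
    have E3 : FA = Rpower 2 alpha * Rpower rad alpha.
      by rewrite /FA Rpower_mult_distr //; [rewrite /rad; congr Rpower; field|lra].
    have H2 : 1 <= Rpower 2 alpha.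
      have -> : 1 = Rpower 1 alpha by rewrite /Rpower ln_1 Rmult_0_r exp_0.
      apply: Rle_Rpower_l; lra.
    have Hab : Rpower aa alpha <= FB.
      apply: Rle_Rpower_l; first lra.
      split => //; have := Ddist_tri s (t (n - 1)%nat) r; rewrite /aa; lra.
    have Hmain : Rpower rad alpha * (FA + FB - FC) <= FA * FB.
      have Hci' : FA - FC <= Rpower 2 alpha * Rpower aa alpha - Rpower aa alpha by rewrite -E2; exact: Hci.
      have : 0 <= (Rpower 2 alpha - 1) * (FB - Rpower aa alpha) by apply: Rmult_le_pos; lra.
      move=> Hpr.
      have Hlin : FA + FB - FC <= Rpower 2 alpha * FB by nra.
      have := Rmult_le_compat_l (Rpower rad alpha) _ _ (Rlt_le _ _ HFR) Hlin.
      rewrite E3; nra.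
    have HN2 : 0 < N0 * N0 by nra.
    have -> : N0 * Rpower rad alpha * (N0 * FA + N0 * FB - N0 * FC) =
              (N0 * N0) * (Rpower rad alpha * (FA + FB - FC)) by ring.
    have -> : N0 * FA * (N0 * FB) = (N0 * N0) * (FA * FB) by ring.
    by apply: Rmult_le_compat_l; lra.
  have Hfin := final0 (N0 * FA) (N0 * FB) (N0 * FC) (N0 * Rpower rad alpha) p q y Ps
    ltac:(nra) ltac:(nra) ltac:(nra) ltac:(nra) ltac:(nra) HK Hp0 Hq0 Hy0 Hpq Hy.
  apply: Rle_trans Hr1 _; apply: Rle_trans _ Hfin.
  apply: Rmin_glb; lra.
clear Hok.
pose close (i : 'I_n) : bool := if Rle_dec (Ddist s (t i)) rad then true else false.
pose S1 : {set node n} := [set v : node n | match v with Some (Some i) => close i | Some None => true | None => false end].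
pose S2 : {set node n} := [set v : node n | match v with Some (Some i) => ~~ close i | _ => false end].
pose a' : alloc n := fun i J => match i with
  | None => if J == S1 then Ps else 0
  | Some None => if J == S2 then Pr else 0
  | Some (Some _) => 0 end.
have Ha' : forall i J, hyperarc i J -> 0 <= a' i J.
  by move=> [[i|]|] J _ /=; try case: eqP => _; lra.
exists a'; split.
  split => //; split.
    rewrite fsumE /a' /= sum_pick; case: ifP => _; lra.
  rewrite fsumE /a' /= sum_pick; case: ifP => _; lra.
apply: Rle_trans Hup _.
rewrite /multicast_rate; apply: minlist_ge.
  by rewrite -size_eq0 size_enum_ord; apply/eqP; lia.
move=> k0 _; rewrite /rate_st; apply: minlist_ge.
  apply/eqP => E.
  move: (mem_filter (fun C : {set node n} => (src \in C) && (tgt k0 \notin C)) [set src] (enum [set: {set node n}])).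
  by rewrite E mem_enum in_setT !inE eqxx.
move=> C; rewrite mem_filter => /andP [/andP [HsC HtC] _].
have Hcap := @cap_ge0 n s m t N0 alpha a'.
rewrite cut_decomp HsC.
have HR0 : 0 <= Rpower rad alpha by lra.
case: (boolP (S1 \subset C)) => HS1.
- have HrC : Defs.rel \in C by apply: (subsetP HS1); rewrite inE.
  rewrite HrC.
  have Hnc : ~~ close k0.
    apply/negP => Hc; move: HtC; rewrite (subsetP HS1) //; by rewrite inE.
  have HtS2 : tgt k0 \in S2 by rewrite inE.
  have Hh : hyperarc Defs.rel S2.
    rewrite /= !inE /= andbT; apply/set0Pn; by exists (tgt k0).
  have HnS : ~~ (S2 \subset C) by apply/subsetPn; exists (tgt k0).
  have H1 : 0 <= \big[Rplus/0]_(J | hyperarc src J && ~~ (J \subset C)) cap s m t N0 alpha a' src J.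
    by apply: sum_ge0 => J /andP [h _]; apply: Hcap.
  have H2 : cap s m t N0 alpha a' Defs.rel S2 <=
      \big[Rplus/0]_(J | hyperarc Defs.rel J && ~~ (J \subset C)) cap s m t N0 alpha a' Defs.rel J.
    apply: (@sum_term _ _ (fun J => cap s m t N0 alpha a' Defs.rel J) S2); first by rewrite Hh HnS.
    by move=> J /andP [h _]; apply: Hcap.
  have H3 : a' Defs.rel S2 / (N0 * Rpower rad alpha) <= cap s m t N0 alpha a' Defs.rel S2.
    apply: cap_ge => //; first by apply: Ha'.
      by apply/set0Pn; exists (tgt k0).
    move=> [[i|]|]; rewrite inE //= => Hi.
    have Hin := ltn_ord i.
    apply: Rle_Rpower_l; first lra.
    split; first by apply: Ddist_pos => E; apply: (Htm _ Hin); rewrite E.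
    case: (Hcov _ Hin) => // Hle.
    by move: Hi; rewrite /close; case: Rle_dec.
  have E : a' Defs.rel S2 = Pr by rewrite /a' /= eqxx.
  move: H3; rewrite E -HPs => H3.
  rewrite /V; lra.
- have Hh : hyperarc src S1.
    rewrite /= !inE /= andbT; apply/set0Pn; exists Defs.rel; by rewrite inE.
  have H2 : cap s m t N0 alpha a' src S1 <=
      \big[Rplus/0]_(J | hyperarc src J && ~~ (J \subset C)) cap s m t N0 alpha a' src J.
    apply: (@sum_term _ _ (fun J => cap s m t N0 alpha a' src J) S1); first by rewrite Hh HS1.
    by move=> J /andP [h _]; apply: Hcap.
  have H3 : a' src S1 / (N0 * Rpower rad alpha) <= cap s m t N0 alpha a' src S1.
    apply: cap_ge => //; first by apply: Ha'.
      by apply/set0Pn; exists Defs.rel; rewrite inE.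
    move=> [[i|]|]; rewrite inE //= => Hi.
      have Hin := ltn_ord i.
      apply: Rle_Rpower_l; first lra.
      split; first by apply: Ddist_pos => E; apply: (Hts _ Hin); rewrite E.
      by move: Hi; rewrite /close; case: Rle_dec.
    rewrite /m Ddist_mid; apply: Rle_Rpower_l; first lra.
    rewrite /rad; lra.
  have E : a' src S1 = Ps by rewrite /a' /= eqxx.
  rewrite E in H3.
  have H4 : 0 <= (if Defs.rel \in C then \big[Rplus/0]_(J | hyperarc Defs.rel J && ~~ (J \subset C)) cap s m t N0 alpha a' Defs.rel J else 0).
    case: ifP => _; last lra.
    by apply: sum_ge0 => J /andP [h _]; apply: Hcap.
  rewrite /V; lra.
Qed.
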